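(* In the setting of the context, assume $N_{ij}^c\neq\emptyset$ for all $ij\in E$, $0<\lambda<1$, $r>0$, and $\beta_t=r\beta_{t+1}$ for all $t\ge1$. Let $M=\frac{4(c-1)^2e\lambda}{(1-\lambda)r^2}$. Assume that $\max_{ij\in E}|s_{ij}^{(1)}-s_{ij}^*|<\frac{1}{2(c-1)\beta_1}$ and that for all $t\ge1$, $$\max_{ij\in E,\ B_{ij}^c\neq\emptyset}\ \frac{1}{|B_{ij}^c|}\sum_{L\in B_{ij}^c}e^{-\beta_t s_L^*}(s_L^* )^2<\frac{1}{M\beta_t^2}.$$ Then the LongSync estimates satisfy $$\max_{ij\in E}|s_{ij}^{(t)}-s_{ij}^*|<\frac{r^{t-1}}{\beta_1}\quad\text{for all }t\ge1.$$
   Context: Setting: $d\ge2$, $c\ge3$, undirected simple graph $G=([n],E)$, ground truth $\boldsymbol{R}_i^*\in SO(d)$, arbitrary measurements $\boldsymbol{R}_{ij}\in SO(d)$ for $ij\in E$ with $\boldsymbol{R}_{ji}=\boldsymbol{R}_{ij}^T$, positive parameters $\beta_0,\beta_1,\dots$. Distance $\mathcal D(\boldsymbol{X},\boldsymbol{Y})=\sqrt{1-\operatorname{tr}(\boldsymbol{X}^T\boldsymbol{Y})/d}$. $\boldsymbol{R}_{ij}^*=\boldsymbol{R}_i^*\boldsymbol{R}_j^{*T}$, $s_{ij}^*=\mathcal D(\boldsymbol{R}_{ij},\boldsymbol{R}_{ij}^* )$; edge $e$ is clean if $s_e^*=0$. $N_{ij}^c$ is the set of sequences $L=(i,k_1,\dots,k_{c-2},j)$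 of pairwise distinct vertices with $ik_1,\dots,k_{c-2}j\in E$; $L\setminus\{ij\}$ denotes these $c-1$ edges; $s_L^*=\sum_{e\in L\setminus\{ij\}}s_e^*$. $\boldsymbol{R}_L=\boldsymbol{R}_{ik_1}\cdots\boldsymbol{R}_{k_{c-2}j}$, $d_L=\mathcal D(\boldsymbol{R}_L,\boldsymbol{R}_{ij})$. $G_{ij}^c$ = cycles in $N_{ij}^c$ whose edges in $L\setminus\{ij\}$ are all clean, $B_{ij}^c=N_{ij}^c\setminus G_{ij}^c$, $\lambda=\max_{ij\in E}|B_{ij}^c|/|N_{ij}^c|$. LongSync with $c$-cycles: $w_L^{(0)}=1$; for $t\ge0$, $s_{ij}^{(t)}=\big(\sum_{L\in N_{ij}^c}w_L^{(t)}d_L^2/\sum_{L\in N_{ij}^c}w_L^{(t)}\big)^{1/2}$ and $w_L^{(t+1)}=\prod_{e\in L\setminus\{ij\}}e^{-\beta_t s_e^{(t)}}$. *)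

(* Defs.v *)
From HB Require Import structures.
From mathcomp Require Import all_boot all_order all_algebra.
From mathcomp Require Import all_classical all_reals all_analysis.
Set Implicit Arguments. Unset Strict Implicit. Unset Printing Implicit Defensive.
Import Order.TTheory GRing.Theory Num.Theory.
Local Open Scope ring_scope.

Definition inSO (R : realType) (d : nat) (X : 'M[R]_d) : Prop :=
  X^T *m X = 1%:M /\ \det X = 1.

Definition Dist (R : realType) (d : nat) (X Y : 'M[R]_d) : R :=
  Num.sqrt (1 - \tr (X^T *m Y) / d%:R).

(* A c-cycle L = (i, k_1, ..., k_{c-2}, j) in N_ij^c is encoded by the
   tuple k of its c-2 intermediate vertices. *)
Definition cyc_vertices (n c : nat) (i j : 'I_n) (k : (c - 2).-tuple 'I_n)
  : seq 'I_n := i :: rcons (tval k) j.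

(* The c-1 edges of L \ {ij}, in order: (i,k_1), (k_1,k_2), ..., (k_{c-2},j). *)
Definition cyc_edges (n c : nat) (i j : 'I_n) (k : (c - 2).-tuple 'I_n)
  : seq ('I_n * 'I_n) :=
  let p := cyc_vertices i j k in zip p (behead p).

Definition Ncyc (n c : nat) (E : rel 'I_n) (i j : 'I_n)
  : {set (c - 2).-tuple 'I_n} :=
  [set k | uniq (cyc_vertices i j k) && path E i (rcons (tval k) j)].

Definition sstar (R : realType) (n d : nat) (Rm : 'I_n -> 'I_n -> 'M[R]_d)
  (Rst : 'I_n -> 'M[R]_d) (a b : 'I_n) : R :=
  Dist (Rm a b) (Rst a *m (Rst b)^T).

Definition sL (R : realType) (n c : nat) (s : 'I_n -> 'I_n -> R) (i j : 'I_n)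
  (k : (c - 2).-tuple 'I_n) : R :=
  \sum_(e <- cyc_edges i j k) s e.1 e.2.

Definition RL (R : realType) (n d c : nat) (Rm : 'I_n -> 'I_n -> 'M[R]_d)
  (i j : 'I_n) (k : (c - 2).-tuple 'I_n) : 'M[R]_d :=
  foldr (fun e A => Rm e.1 e.2 *m A) 1%:M (cyc_edges i j k).

Definition dL (R : realType) (n d c : nat) (Rm : 'I_n -> 'I_n -> 'M[R]_d)
  (i j : 'I_n) (k : (c - 2).-tuple 'I_n) : R :=
  Dist (RL Rm i j k) (Rm i j).

Definition Gcyc (R : realType) (n d c : nat) (E : rel 'I_n)
  (Rm : 'I_n -> 'I_n -> 'M[R]_d) (Rst : 'I_n -> 'M[R]_d) (i j : 'I_n)
  : {set (c - 2).-tuple 'I_n} :=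
  [set k in Ncyc c E i j |
     all (fun e => sstar Rm Rst e.1 e.2 == 0) (cyc_edges i j k)].

Definition Bcyc (R : realType) (n d c : nat) (E : rel 'I_n)
  (Rm : 'I_n -> 'I_n -> 'M[R]_d) (Rst : 'I_n -> 'M[R]_d) (i j : 'I_n)
  : {set (c - 2).-tuple 'I_n} :=
  Ncyc c E i j :\: Gcyc c E Rm Rst i j.

Definition lambda (R : realType) (n d c : nat) (E : rel 'I_n)
  (Rm : 'I_n -> 'I_n -> 'M[R]_d) (Rst : 'I_n -> 'M[R]_d) : R :=
  \big[Num.max/0]_(p : 'I_n * 'I_n | E p.1 p.2)
     ((#|Bcyc c E Rm Rst p.1 p.2|)%:R / (#|Ncyc c E p.1 p.2|)%:R).

Definition est (R : realType) (n d c : nat) (E : rel 'I_n)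
  (Rm : 'I_n -> 'I_n -> 'M[R]_d)
  (w : 'I_n -> 'I_n -> (c - 2).-tuple 'I_n -> R) (i j : 'I_n) : R :=
  Num.sqrt ((\sum_(k in Ncyc c E i j) w i j k * dL Rm i j k ^+ 2)
            / (\sum_(k in Ncyc c E i j) w i j k)).

Fixpoint longsync (R : realType) (n d c : nat) (E : rel 'I_n)
  (Rm : 'I_n -> 'I_n -> 'M[R]_d) (beta : nat -> R) (t : nat)
  : 'I_n -> 'I_n -> R :=
  match t with
  | 0 => @est R n d c E Rm (fun _ _ _ => 1)
  | t'.+1 =>
      let sp := longsync c E Rm beta t' in
      @est R n d c E Rm (fun i j k =>
        \prod_(e <- cyc_edges i j k) expR (- (beta t' * sp e.1 e.2)))
  end.

(* Main.v *)
Require Import Defs.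
From HB Require Import structures.
From mathcomp Require Import all_boot all_order all_algebra.
From mathcomp Require Import all_classical all_reals all_analysis.
From mathcomp Require Import lra zify ring.
Import Order.TTheory GRing.Theory Num.Theory.
Set Implicit Arguments. Unset Strict Implicit. Unset Printing Implicit Defensive.
Local Open Scope ring_scope.

Section Mx.
Variables (R : realType) (d : nat).
Implicit Types (A B C X Y Z : 'M[R]_d).

Definition ip A B : R := \tr (A^T *m B).

Lemma ip_sym A B : ip A B = ip B A.
Proof. by rewrite /ip -mxtrace_tr trmx_mul trmxK. Qed.

Lemma ipDl A B C : ip (A + B) C = ip A C + ip B C.
Proof. by rewrite /ip linearD /= mulmxDl mxtraceD. Qed.

Lemma ipZl a A B : ip (a *: A) B = a * ip A B.
Proof. by rewrite /ip linearZ /= -scalemxAl mxtraceZ. Qed.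

Lemma ipDr A B C : ip A (B + C) = ip A B + ip A C.
Proof. by rewrite ip_sym ipDl !(ip_sym A). Qed.

Lemma ipZr a A B : ip A (a *: B) = a * ip A B.
Proof. by rewrite ip_sym ipZl ip_sym. Qed.

Lemma ip_ge0 A : 0 <= ip A A.
Proof.
rewrite /ip /mxtrace; apply: sumr_ge0 => i _; rewrite mxE.
apply: sumr_ge0 => k _; rewrite mxE -expr2; exact: sqr_ge0.
Qed.

Lemma ip_comb u v A B :
  ip (u *: A + v *: B) (u *: A + v *: B) =
  u ^+ 2 * ip A A + 2 * u * v * ip A B + v ^+ 2 * ip B B.
Proof.
rewrite !ipDl !ipDr !ipZl !ipZr (ip_sym B A); ring.
Qed.

Lemma ip_CS A B : ip A B ^+ 2 <= ip A A * ip B B.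
Proof.
set a := ip A A; set b := ip B B; set x := ip A B.
have ha : 0 <= a := ip_ge0 A. have hb : 0 <= b := ip_ge0 B.
have [b0|bpos] := eqVneq b 0.
  have [x0|xn0] := eqVneq x 0; first by rewrite x0 b0; nra.
  have := ip_ge0 (1 *: A + (- ((a + 1) / (2 * x))) *: B).
  rewrite ip_comb -/a -/b -/x b0.
  have -> : 2 * 1 * - ((a + 1) / (2 * x)) * x = - (a + 1) by field.
  nra.
have := ip_ge0 (b *: A + (- x) *: B).
rewrite ip_comb -/a -/b -/x => h.
have bp : 0 < b by rewrite lt0r bpos.
nra.
Qed.

Definition nm A : R := Num.sqrt (ip A A).

Lemma nm_ge0 A : 0 <= nm A. Proof. exact: sqrtr_ge0. Qed.

Lemma sq_le (x y : R) : 0 <= y -> x ^+ 2 <= y ^+ 2 -> x <= y.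
Proof. move=> *; nra. Qed.

Lemma nm_tri A B : nm (A + B) <= nm A + nm B.
Proof.
apply: sq_le; first by rewrite addr_ge0 ?nm_ge0.
rewrite /nm sqr_sqrtr ?ip_ge0 //.
have := ip_CS A B.
have hA := sqr_sqrtr (ip_ge0 A). have hB := sqr_sqrtr (ip_ge0 B).
have gA := sqrtr_ge0 (ip A A). have gB := sqrtr_ge0 (ip B B).
have -> : ip (A + B) (A + B) = ip A A + 2 * ip A B + ip B B.
  by rewrite ipDl !ipDr (ip_sym B A); ring.
set sa := Num.sqrt (ip A A) in hA gA *; set sb := Num.sqrt (ip B B) in hB gB *.
move=> cs.
have : ip A B <= sa * sb.
  apply: sq_le; first exact: mulr_ge0.
  by rewrite exprMn hA hB.
move=> h. rewrite -hA -hB. nra.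
Qed.

Lemma nmN A : nm (- A) = nm A.
Proof.
rewrite /nm; congr Num.sqrt.
have -> : - A = (-1) *: A by rewrite scaleN1r.
by rewrite ipZl ipZr; ring.
Qed.

Definition dd X Y := nm (X - Y).

Lemma dd_sym X Y : dd X Y = dd Y X.
Proof. by rewrite /dd -nmN opprB. Qed.

Lemma dd_tri X Y Z : dd X Z <= dd X Y + dd Y Z.
Proof.
rewrite /dd; have -> : X - Z = (X - Y) + (Y - Z) by rewrite addrA subrK.
exact: nm_tri.
Qed.

Definition orth A := A^T *m A = 1%:M.

Lemma orthC A : orth A -> A *m A^T = 1%:M.
Proof. exact: mulmx1C. Qed.

Lemma orth_tr A : orth A -> orth A^T.
Proof. by move=> h; rewrite /orth trmxK orthC. Qed.

Lemma orth_mul A B : orth A -> orth B -> orth (A *m B).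
Proof.
move=> hA hB; rewrite /orth trmx_mul mulmxA -(mulmxA B^T) hA mulmx1 hB //.
Qed.

Lemma orth1 : orth 1%:M.
Proof. by rewrite /orth trmx1 mul1mx. Qed.

Lemma ipL A Z : orth A -> ip (A *m Z) (A *m Z) = ip Z Z.
Proof. by move=> h; rewrite /ip trmx_mul mulmxA -(mulmxA Z^T) h mulmx1. Qed.

Lemma ipR A Z : orth A -> ip (Z *m A) (Z *m A) = ip Z Z.
Proof.
move=> h; rewrite /ip trmx_mul mxtrace_mulC -!mulmxA (mulmxA A) orthC // mul1mx mxtrace_mulC; congr (\tr _). 
Qed.

Lemma ddL A X Y : orth A -> dd (A *m X) (A *m Y) = dd X Y.
Proof. by move=> h; rewrite /dd /nm -mulmxBr ipL. Qed.

Lemma ddR A X Y : orth A -> dd (X *m A) (Y *m A) = dd X Y.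
Proof. by move=> h; rewrite /dd /nm -mulmxBl ipR. Qed.

Lemma ip_orth A : orth A -> ip A A = d%:R.
Proof. by move=> h; rewrite /ip h mxtrace1. Qed.

Lemma Dist_dd X Y : (0 < d)%N -> orth X -> orth Y ->
  Dist X Y = Num.sqrt ((2 * d%:R)^-1) * dd X Y.
Proof.
move=> d0 hX hY; rewrite /Dist /dd /nm -sqrtrM; last by rewrite invr_ge0 mulr_ge0 // ler0n.
congr Num.sqrt.
have -> : ip (X - Y) (X - Y) = ip X X - 2 * ip X Y + ip Y Y.
  rewrite -scaleN1r ipDl !ipDr !ipZl !ipZr (ip_sym Y X); ring.
rewrite !ip_orth // /ip.
have dn : d%:R != 0 :> R by rewrite pnatr_eq0 -lt0n.
field; exact: dn.
Qed.
End Mx.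
Section Cyc.
Variables (R : realType) (n d c : nat) (E : rel 'I_n).
Variables (Rst : 'I_n -> 'M[R]_d) (Rm : 'I_n -> 'I_n -> 'M[R]_d).
Hypothesis d0 : (0 < d)%N.
Hypothesis hRst : forall i, orth (Rst i).
Hypothesis hRm : forall i j, E i j -> orth (Rm i j).

Lemma path_edges a p : path E a p -> forall e, e \in zip (a :: p) p -> E e.1 e.2.
Proof.
elim: p a => [|b p IH] a //= /andP[hab hp] e; rewrite inE => /orP[/eqP->//|].
exact: IH.
Qed.

Definition Sfun (e : 'I_n * 'I_n) := Rst e.1 *m (Rst e.2)^T.

Lemma foldr_star a p :
  foldr (fun e A => Sfun e *m A) 1%:M (zip (a :: p) p) = Rst a *m (Rst (last a p))^T.
Proof.
elim: p a => [|b p IH] a /=; first by rewrite orthC.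
rewrite IH /Sfun -!mulmxA (mulmxA (Rst b)^T) hRst mul1mx //.
Qed.

Lemma tele es : (forall e, e \in es -> E e.1 e.2) ->
  orth (foldr (fun e A => Rm e.1 e.2 *m A) 1%:M es) /\
  dd (foldr (fun e A => Rm e.1 e.2 *m A) 1%:M es) (foldr (fun e A => Sfun e *m A) 1%:M es)
  <= \sum_(e <- es) dd (Rm e.1 e.2) (Sfun e).
Proof.
elim: es => [|e es IH] hE /=.
  by rewrite big_nil /dd subrr /nm /ip mulmx0 linear0 sqrtr0; split => //; exact: orth1.
case: (IH (fun e' he' => hE e' (mem_behead (s := e :: es) he'))) => o1 h1.
have he : E e.1 e.2 by apply: hE; rewrite inE eqxx.
have oS : orth (Sfun e) by apply: orth_mul => //; exact: orth_tr.
split; first exact: orth_mul (hRm he) o1.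
rewrite big_cons.
apply: le_trans (dd_tri _ (Sfun e *m foldr (fun e A => Rm e.1 e.2 *m A) 1%:M es) _) _.
by rewrite ddR // ddL // lerD2l.
Qed.

Lemma dL_bound i j (k : (c - 2).-tuple 'I_n) : E i j -> k \in Ncyc c E i j ->
  `|dL Rm i j k - sstar Rm Rst i j| <= sL (sstar Rm Rst) i j k.
Proof.
move=> hij; rewrite inE => /andP[_ hp].
have hE := path_edges hp.
case: (tele hE) => oL hL.
have eS : foldr (fun e A => Sfun e *m A) 1%:M (cyc_edges i j k) = Rst i *m (Rst j)^T.
  by rewrite /cyc_edges /cyc_vertices /= foldr_star last_rcons.
rewrite eS in hL.
set k0 := Num.sqrt ((2 * d%:R)^-1 : R).
have k0p : 0 <= k0 by exact: sqrtr_ge0.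
have oY : orth (Rst i *m (Rst j)^T) by apply: orth_mul => //; exact: orth_tr.
rewrite /dL /RL /sstar !Dist_dd //; try exact: hRm hij.
have -> : sL (sstar Rm Rst) i j k = k0 * \sum_(e <- cyc_edges i j k) dd (Rm e.1 e.2) (Sfun e).
  rewrite /sL mulr_sumr big_seq [RHS]big_seq; apply: eq_bigr => e he.
  rewrite /sstar Dist_dd //; first exact: hRm (hE e he).
  by apply: orth_mul => //; exact: orth_tr.
rewrite -mulrBr normrM (ger0_norm k0p); apply: ler_wpM2l => //.
apply: le_trans hL.
set X := foldr _ _ _ in oL *.
have t1 := dd_tri X (Rst i *m (Rst j)^T) (Rm i j).
have t2 := dd_tri (Rm i j) X (Rst i *m (Rst j)^T).
rewrite (dd_sym (Rst i *m (Rst j)^T)) in t1. rewrite (dd_sym (Rm i j) X) in t2.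
rewrite ler_norml; apply/andP; split; lra.
Qed.
End Cyc.
Section Ana.
Variable R : realType.

Lemma le_bigmax_seq (T : eqType) (r : seq T) (P : pred T) (F : T -> R) p :
  p \in r -> P p -> F p <= \big[Num.max/0]_(q <- r | P q) F q.
Proof.
elim: r => [|a r IH] //; rewrite inE big_cons => /orP[/eqP<-|hp] hP.
  by rewrite hP le_max lexx.
case: (P a); last exact: IH.
by rewrite le_max IH ?orbT.
Qed.

Lemma le_bigmaxR (T : finType) (P : pred T) (F : T -> R) p :
  P p -> F p <= \big[Num.max/0]_(q | P q) F q.
Proof. by move=> hP; apply: le_bigmax_seq => //; rewrite mem_index_enum. Qed.

Lemma prod_exp (T : Type) (es : seq T) (b : R) (f : T -> R) :
  \prod_(e <- es) expR (- (b * f e)) = expR (- (b * \sum_(e <- es) f e)).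
Proof.
elim: es => [|e es IH]; first by rewrite !big_nil mulr0 oppr0 expR0.
by rewrite !big_cons IH -expRD mulrDr opprD.
Qed.

Lemma sum_approx (T : eqType) (es : seq T) (f g : T -> R) (eps : R) :
  (forall e, e \in es -> `|f e - g e| <= eps) ->
  `|\sum_(e <- es) f e - \sum_(e <- es) g e| <= (size es)%:R * eps.
Proof.
elim: es => [|e es IH] h; first by rewrite !big_nil subrr normr0 mul0r.
rewrite !big_cons /= -addn1 natrD mulrDl mul1r.
have -> : f e + \sum_(j <- es) f j - (g e + \sum_(j <- es) g j)
  = (\sum_(j <- es) f j - \sum_(j <- es) g j) + (f e - g e) by ring.
apply: le_trans (ler_normD _ _) _; apply: lerD.
  by apply: IH => x hx; apply: h; rewrite inE hx orbT.
by apply: h; rewrite inE eqxx.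
Qed.

Lemma sq_le' (x y : R) : 0 <= y -> x ^+ 2 <= y ^+ 2 -> x <= y.
Proof. move=> *; nra. Qed.

Lemma L2 (I : finType) (A : {set I}) (w dl : I -> R) (s : R) :
  (forall k, k \in A -> 0 <= w k) -> 0 < \sum_(k in A) w k -> 0 <= s ->
  (Num.sqrt ((\sum_(k in A) w k * dl k ^+ 2) / \sum_(k in A) w k) - s) ^+ 2
   <= (\sum_(k in A) w k * (dl k - s) ^+ 2) / \sum_(k in A) w k.
Proof.
move=> hw Wp hs.
set W := \sum_(k in A) w k.
set S2 := \sum_(k in A) w k * dl k ^+ 2.
set S1 := \sum_(k in A) w k * dl k.
have iden x : \sum_(k in A) w k * (dl k - x) ^+ 2 = S2 - 2 * x * S1 + x ^+ 2 * W.
  rewrite /S2 /S1 /W [2 * x * _]mulr_sumr [x ^+ 2 * _]mulr_sumr -sumrB -big_split /=.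
  by apply: eq_bigr => k _; ring.
have Wn : W != 0 by rewrite gt_eqF.
have hS2 : 0 <= S2 by apply: sumr_ge0 => k hk; rewrite mulr_ge0 ?hw ?sqr_ge0.
set m := S1 / W.
have eS1 : S1 = m * W by rewrite /m; field.
have var : m ^+ 2 <= S2 / W.
  have g : 0 <= \sum_(k in A) w k * (dl k - m) ^+ 2.
    by apply: sumr_ge0 => k hk; rewrite mulr_ge0 ?hw ?sqr_ge0.
  rewrite iden eS1 in g.
  rewrite ler_pdivlMr //; nra.
have hA : 0 <= S2 / W by rewrite divr_ge0 // ltW.
have msq : m <= Num.sqrt (S2 / W).
  by apply: sq_le'; rewrite ?sqrtr_ge0 // sqr_sqrtr.
rewrite iden.
have -> : (S2 - 2 * s * S1 + s ^+ 2 * W) / W = S2 / W - 2 * s * m + s ^+ 2.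
  by rewrite /m; field.
have := sqr_sqrtr hA.
set q := Num.sqrt (S2 / W) in msq *; move=> hq.
nra.
Qed.
End Ana.
Section Step.
Variable R : realType.

Lemma step (I : finType) (N G : {set I}) (w dl sl : I -> R) (s0 b lam r C : R) :
  N != finset.set0 ->
  (forall k, k \in N -> 0 < w k) ->
  (forall k, k \in N -> `|dl k - s0| <= sl k) ->
  (forall k, k \in N -> w k <= expR (1/2) * expR (- (b * sl k))) ->
  (forall k, k \in N :&: G -> expR (- (1/2)) <= w k /\ sl k = 0) ->
  0 <= s0 -> 0 < b -> 0 < r -> 0 < C -> 0 < lam -> lam < 1 ->
  #|N :\: G|%:R / #|N|%:R <= lam ->
  (N :\: G != finset.set0 ->
     (#|N :\: G|%:R)^-1 * (\sum_(k in N :\: G) expR (- (b * sl k)) * sl k ^+ 2)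
     < 1 / (4 * C ^+ 2 * expR 1 * lam / ((1 - lam) * r ^+ 2) * b ^+ 2)) ->
  `|Num.sqrt ((\sum_(k in N) w k * dl k ^+ 2) / \sum_(k in N) w k) - s0|
    < r / (2 * C * b).
Proof.
move=> hN hw hd hwb hwg hs0 hb hr hC hl0 hl1 hratio hB.
set h := expR (1/2 : R). set g := expR (- (1/2) : R).
have hp : 0 < h := expR_gt0 _. have gp : 0 < g := expR_gt0 _.
have hg : h * g = 1 by rewrite /h /g -expRD subrr expR0.
have ehh : expR 1 = h * h by rewrite /h -expRD; congr expR; field.
set nN := (#|N|%:R : R). set nG := (#|N :&: G|%:R : R). set nB := (#|N :\: G|%:R : R).
have eN : nN = nG + nB by rewrite /nN /nG /nB -natrD cardsID.
have nNp : 0 < nN by rewrite /nN ltr0n card_gt0.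
have nBlam : nB <= lam * nN by rewrite -ler_pdivrMr // mulrC.
have nB0 : 0 <= nB by rewrite ler0n.
have nGp : 0 < nG by nra.
set W := \sum_(k in N) w k.
have WG : nG * g <= \sum_(k in N :&: G) w k.
  have -> : nG * g = \sum_(k in N :&: G) g.
    by rewrite sumr_const /nG mulr_natl.
  by apply: ler_sum => k hk; case: (hwg k hk).
have Wsplit : W = \sum_(k in N :&: G) w k + \sum_(k in N :\: G) w k by rewrite /W (big_setID G).
have WB : 0 <= \sum_(k in N :\: G) w k.
  by apply: sumr_ge0 => k; rewrite inE => /andP[_ hk]; apply: ltW; apply: hw.
have WgeG : nG * g <= W by apply: le_trans WG _; rewrite Wsplit lerDl.
have Wp : 0 < W by apply: lt_le_trans WgeG; exact: mulr_gt0.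
have hl2 := L2 dl (fun k hk => ltW (hw k hk)) Wp hs0.
set x := Num.sqrt _ - s0 in hl2 *.
have D1 : \sum_(k in N) w k * (dl k - s0) ^+ 2 <= \sum_(k in N) w k * sl k ^+ 2.
  apply: ler_sum => k hk; apply: ler_wpM2l; first exact: ltW (hw k hk).
  have := hd k hk; have := normr_ge0 (dl k - s0).
  rewrite -(real_normK (num_real (dl k - s0))); set y := `|_|; nra.
have D2 : \sum_(k in N) w k * sl k ^+ 2 = \sum_(k in N :\: G) w k * sl k ^+ 2.
  rewrite (big_setID G) /= big1 ?add0r // => k hk.
  by case: (hwg k hk) => _ ->; rewrite expr0n mulr0.
set SB := \sum_(k in N :\: G) w k * sl k ^+ 2 in D2.
set T' := r / (2 * C * b).
have T'p : 0 < T' by rewrite /T' divr_gt0 // !mulr_gt0.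
suff key : SB < T' ^+ 2 * W.
  have x2 : x ^+ 2 < T' ^+ 2.
    apply: le_lt_trans hl2 _; rewrite ltr_pdivrMr //; apply: le_lt_trans D1 _; by rewrite D2.
  rewrite -(real_normK (num_real x)) in x2.
  have := normr_ge0 x; set y := `|x| in x2 *; nra.
have [B0|Bn0] := eqVneq (N :\: G) finset.set0.
  rewrite /SB B0 big_set0; apply: mulr_gt0 => //; exact: exprn_gt0.
have hX := hB Bn0.
set X := \sum_(k in N :\: G) _ in hX.
have nBp : 0 < nB by rewrite /nB ltr0n card_gt0.
have SBX : SB <= h * X.
  rewrite /SB /X mulr_sumr; apply: ler_sum => k; rewrite inE => /andP[_ hk].
  rewrite mulrA; apply: ler_wpM2r; first exact: sqr_ge0.
  exact: hwb.
set Mb := 4 * C ^+ 2 * expR 1 * lam / ((1 - lam) * r ^+ 2) * b ^+ 2 in hX.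
have Mbp : 0 < Mb.
  rewrite /Mb; apply: mulr_gt0; last exact: exprn_gt0.
  apply: divr_gt0; last by apply: mulr_gt0; [lra | exact: exprn_gt0].
  by rewrite !mulr_gt0 ?expR_gt0 ?exprn_gt0.
have XM : X * Mb < nB.
  have e1 : X * Mb = (nB^-1 * X) * (nB * Mb) by field; rewrite gt_eqF.
  have e2 : nB = (1 / Mb) * (nB * Mb) by field; rewrite gt_eqF.
  by rewrite e1 [X in _ < X]e2 ltr_pM2r // mulr_gt0.
have idM : Mb * T' ^+ 2 * (1 - lam) = expR 1 * lam.
  rewrite /Mb /T'; field.
  by rewrite !gt_eqF //; lra.
have XS : 0 <= X.
  apply: sumr_ge0 => k; rewrite inE => /andP[_ hk].
  apply: mulr_ge0; [exact: ltW (expR_gt0 _) | exact: sqr_ge0].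
have Pp : 0 < T' ^+ 2 * (1 - lam) by apply: mulr_gt0; [exact: exprn_gt0 | lra].
have step1 : X * Mb * (T' ^+ 2 * (1 - lam)) < nB * (T' ^+ 2 * (1 - lam)) by rewrite ltr_pM2r.
have idM' : X * Mb * (T' ^+ 2 * (1 - lam)) = X * (expR 1 * lam) by rewrite -idM; ring.
have step2 : nB * (1 - lam) <= lam * nG by nra.
have T2p : 0 < T' ^+ 2 by exact: exprn_gt0.
have step3 : X * expR 1 < nG * T' ^+ 2.
  rewrite -(ltr_pM2r hl0).
  have -> : X * expR 1 * lam = X * (expR 1 * lam) by ring.
  rewrite -idM'; apply: lt_le_trans step1 _.
  have -> : nB * (T' ^+ 2 * (1 - lam)) = T' ^+ 2 * (nB * (1 - lam)) by ring.
  have -> : nG * T' ^+ 2 * lam = T' ^+ 2 * (lam * nG) by ring.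
  by rewrite ler_pM2l.
rewrite ehh in step3.
apply: le_lt_trans SBX _.
have -> : h * X = g * (X * (h * h)) by rewrite -[LHS]mulr1 -hg; ring.
apply: lt_le_trans (_ : g * (nG * T' ^+ 2) <= _); first by rewrite ltr_pM2l.
have -> : g * (nG * T' ^+ 2) = T' ^+ 2 * (nG * g) by ring.
by rewrite ler_pM2l.
Qed.
End Step.
Lemma size_cyc (n c : nat) (i j : 'I_n) (k : (c - 2).-tuple 'I_n) :
  (3 <= c)%N -> size (cyc_edges i j k) = (c - 1)%N.
Proof.
move=> hc; rewrite /cyc_edges /cyc_vertices /= size_zip /= size_rcons size_tuple.
rewrite minnE; lia.
Qed.

Theorem mainTheorem4 (R : realType) (n d c : nat) (E : rel 'I_n)
  (Rst : 'I_n -> 'M[R]_d) (Rm : 'I_n -> 'I_n -> 'M[R]_d)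
  (beta : nat -> R) (r : R) :
  (2 <= d)%N -> (3 <= c)%N ->
  irreflexive E -> symmetric E ->
  (forall i, inSO (Rst i)) ->
  (forall i j, E i j -> inSO (Rm i j)) ->
  (forall i j, E i j -> Rm j i = (Rm i j)^T) ->
  (forall t, 0 < beta t) ->
  (forall i j, E i j -> Ncyc c E i j != finset.set0) ->
  0 < lambda c E Rm Rst < 1 ->
  0 < r ->
  (forall t, (1 <= t)%N -> beta t = r * beta t.+1) ->
  let M := 4 * ((c - 1)%:R) ^+ 2 * expR 1 * lambda c E Rm Rst
           / ((1 - lambda c E Rm Rst) * r ^+ 2) in
  let sst := sstar Rm Rst in
  let s := longsync c E Rm beta in
  (forall i j, E i j ->
     `|s 1%N i j - sst i j| < 1 / (2 * (c - 1)%:R * beta 1%N)) ->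
  (forall t, (1 <= t)%N -> forall i j, E i j ->
     Bcyc c E Rm Rst i j != finset.set0 ->
     (#|Bcyc c E Rm Rst i j|%:R)^-1 *
       (\sum_(k in Bcyc c E Rm Rst i j)
          expR (- (beta t * sL sst i j k)) * sL sst i j k ^+ 2)
     < 1 / (M * beta t ^+ 2)) ->
  forall t, (1 <= t)%N -> forall i j, E i j ->
    `|s t i j - sst i j| < r ^+ (t - 1) / beta 1%N.
Proof.
move=> hd hc _ _ hRst0 hRm0 _ hbeta hN /andP[hl0 hl1] hr hbr M sst s hs1 hBh.
have d0 : (0 < d)%N by apply: leq_trans hd.
have hRst : forall i, orth (Rst i) by move=> i; case: (hRst0 i).
have hRm : forall i j, E i j -> orth (Rm i j) by move=> i j h; case: (hRm0 i j h).
set C : R := (c - 1)%:R.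
have Cge : 2 <= C by rewrite /C -[2]/(2%:R) ler_nat; lia.
have Cp : 0 < C by lra.
have P : forall t, (1 <= t)%N -> forall i j, E i j ->
    `|s t i j - sst i j| < 1 / (2 * C * beta t).
  elim=> [//|t IH] _.
  case: t IH => [_|t IH]; first exact: hs1.
  have IH' := IH isT.
  set t1 := t.+1 in IH' *.
  move=> i j hij.
  have bt : 0 < beta t1 := hbeta t1.
  have -> : 1 / (2 * C * beta t1.+1) = r / (2 * C * beta t1).
    rewrite (hbr t1 isT); field.
    by rewrite !gt_eqF // ?hbeta //.
  rewrite /s /= /est.
  pose w (k : (c - 2).-tuple 'I_n) := \prod_(e <- cyc_edges i j k) expR (- (beta t1 * longsync c E Rm beta t1 e.1 e.2)).
  have hw : forall k : (c - 2).-tuple 'I_n, w k = expR (- (beta t1 * \sum_(e <- cyc_edges i j k) longsync c E Rm beta t1 e.1 e.2)).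
    by move=> k; rewrite /w prod_exp.
  have approx : forall k, k \in Ncyc c E i j ->
    `|\sum_(e <- cyc_edges i j k) longsync c E Rm beta t1 e.1 e.2 - sL sst i j k|
      <= 1 / (2 * beta t1).
    move=> k hk.
    have hp : path E i (rcons k j) by move: hk; rewrite inE => /andP[].
    apply: le_trans (sum_approx (eps := 1 / (2 * C * beta t1)) _) _.
      move=> e he; apply: ltW; apply: IH'.
      exact: path_edges hp e he.
    rewrite size_cyc // -/C -subr_ge0 (_ : _ - _ = 0) //; field.
    by rewrite !gt_eqF.
  have := step (I := (c - 2).-tuple 'I_n) (N := Ncyc c E i j) (G := Gcyc c E Rm Rst i j)
    (w := w) (dl := fun k => dL Rm i j k) (sl := sL sst i j) (s0 := sst i j)
    (b := beta t1) (lam := lambda c E Rm Rst) (r := r) (C := C).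
  apply.
  - exact: hN.
  - move=> k _; rewrite hw; exact: expR_gt0.
  - move=> k hk; exact: (dL_bound d0 hRst hRm hij hk).
  - move=> k hk; rewrite hw -expRD ler_expR.
    have := approx k hk; rewrite ler_norml => /andP[h1 h2].
    have e1 : beta t1 * (1 / (2 * beta t1)) = 1 / 2 by field; rewrite gt_eqF.
    nra.
  - move=> k; rewrite inE => /andP[hkN]; rewrite inE => /andP[_ hall].
    have sl0 : sL sst i j k = 0.
      rewrite /sL big_seq big1 // => e he.
      by move/allP: hall => /(_ e he) /eqP.
    split => //; rewrite hw ler_expR.
    have := approx k hkN; rewrite sl0 subr0 ler_norml => /andP[h1 h2].
    have e1 : beta t1 * (1 / (2 * beta t1)) = 1 / 2 by field; rewrite gt_eqF.
    nra.
  - exact: sqrtr_ge0.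
  - exact: hbeta.
  - exact: hr.
  - exact: Cp.
  - exact: hl0.
  - exact: hl1.
  - rewrite /lambda.
    exact: (@le_bigmaxR R _ (fun p : 'I_n * 'I_n => E p.1 p.2)
      (fun p : 'I_n * 'I_n => (#|Bcyc c E Rm Rst p.1 p.2|%:R / (#|Ncyc c E p.1 p.2|%:R) : R)) (i, j) hij).
  - exact: (hBh t1 isT i j hij).
move=> t ht i j hij.
apply: lt_le_trans (P t ht i j hij) _.
have bt := hbeta t.
have b1 : beta 1%N = r ^+ (t - 1) * beta t.
  case: t ht {P bt} hij => [//|t] _ _.
  rewrite subSS subn0.
  elim: t => [|t IH]; first by rewrite expr0 mul1r.
  by rewrite IH (hbr t.+1 isT) exprSr; ring.
rewrite b1.
have -> : r ^+ (t - 1) / (r ^+ (t - 1) * beta t) = 1 / beta t.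
  field; rewrite !gt_eqF ?exprn_gt0 //.
rewrite ler_pdivrMr; last by rewrite !mulr_gt0.
have -> : 1 / beta t * (2 * C * beta t) = 2 * C by field; rewrite gt_eqF.
lra.
Qed.
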